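(* Let $C$ be a category with a variance $(E,M)$ and let $D$ be a category. Let $G\colon E\rightarrow D$ and $H\colon M\rightarrow D$ be (covariant) functors which are compatible, meaning: $G$ and $H$ agree on objects, and $$H(f^m)\,G(f^e) = G(f_e)\,H(f_m)$$ for every morphism $f$ of $C$. Then there exists a unique functor $F\colon C\rightarrow D$ whose restriction to $E$ is $G$ and whose restriction to $M$ is $H$.
   Context: A strict factorization system on a category $C$ is a pair $(E,M)$ of subcategories of $C$, both containing all objects of $C$, such that every morphism $f$ of $C$ factors uniquely as $f=me$ with $e$ a morphism of $E$ and $m$ a morphism of $M$. A variance on $C$ is a pair $(E,M)$ such that both $(E,M)$ and $(M,E)$ are strict factorization systems on $C$. For a morphism $f\colon x\rightarrow y$ of $C$, write its unique factorizations as $f=f^m f^e$ with $f^e\colon x\rightarrow f_t$ in $E$ and $f^m\colon f_t\rightarrow y$ in $M$ (the terminating factorization), and $f=f_e f_m$ with $f_m\colon x\rightarrow f_s$ in $M$ and $f_e\colon f_s\rightarrow y$ in $E$ (the starting factorization). *)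

(* Defs.v *)
Set Implicit Arguments.
Unset Strict Implicit.

Record Category := {
  ob :> Type;
  hom : ob -> ob -> Type;
  idm : forall x, hom x x;
  comp : forall x y z, hom y z -> hom x y -> hom x z;
  comp_idl : forall x y (f : hom x y), comp (idm y) f = f;
  comp_idr : forall x y (f : hom x y), comp f (idm x) = f;
  comp_assoc : forall x y z w (f : hom x y) (g : hom y z) (h : hom z w),
      comp h (comp g f) = comp (comp h g) f
}.

Arguments hom {c} _ _.
Arguments idm {c} _.
Arguments comp {c x y z} _ _.

Record WideSubcat (C : Category) := {
  mem : forall x y : C, hom x y -> Prop;
  mem_id : forall x : C, mem (idm x);
  mem_comp : forall (x y z : C) (g : hom y z) (f : hom x y),
      mem f -> mem g -> mem (comp g f)
}.

Arguments mem {C} _ {x y} _.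

(* (E, M) is a strict factorization system: every f factors uniquely as f = m e
   with e in E and m in M.  Uniqueness is uniqueness of the triple
   (middle object, e, m) as a dependent pair. *)
Definition strict_factorization (C : Category) (E M : WideSubcat C) : Prop :=
  forall (x y : C) (f : hom x y),
    (exists (t : C) (e : hom x t) (m : hom t y),
        mem E e /\ mem M m /\ f = comp m e) /\
    (forall (t t' : C) (e : hom x t) (m : hom t y) (e' : hom x t') (m' : hom t' y),
        mem E e -> mem M m -> f = comp m e ->
        mem E e' -> mem M m' -> f = comp m' e' ->
        existT (fun s : C => (hom x s * hom s y)%type) t (e, m)
        = existT (fun s : C => (hom x s * hom s y)%type) t' (e', m')).

Definition variance (C : Category) (E M : WideSubcat C) : Prop :=
  strict_factorization E M /\ strict_factorization M E.

Record SubFunctor (C : Category) (E : WideSubcat C) (D : Category) (o : C -> D) := {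
  smap : forall (x y : C) (f : hom x y), mem E f -> hom (o x) (o y);
  smap_id : forall (x : C) (p : mem E (idm x)), smap p = idm (o x);
  smap_comp : forall (x y z : C) (g : hom y z) (f : hom x y)
      (pg : mem E g) (pf : mem E f) (pgf : mem E (comp g f)),
      smap pgf = comp (smap pg) (smap pf)
}.

Arguments smap {C E D o} _ {x y} f _.

Definition is_functor (C D : Category) (o : C -> D)
    (F : forall x y : C, hom x y -> hom (o x) (o y)) : Prop :=
  (forall x : C, F x x (idm x) = idm (o x)) /\
  (forall (x y z : C) (g : hom y z) (f : hom x y),
      F x z (comp g f) = comp (F y z g) (F x y f)).

(* Compatibility of G : E -> D and H : M -> D (sharing the object map o):
   H(f^m) G(f^e) = G(f_e) H(f_m) for the terminating factorization f = f^m f^e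
   (f^e in E, f^m in M) and the starting factorization f = f_e f_m
   (f_m in M, f_e in E). *)
Definition compatible (C D : Category) (E M : WideSubcat C) (o : C -> D)
    (G : @SubFunctor C E D o) (H : @SubFunctor C M D o) : Prop :=
  forall (x y : C) (f : hom x y)
    (t : C) (fe : hom x t) (fm : hom t y) (pe : mem E fe) (pm : mem M fm),
    f = comp fm fe ->
    forall (s : C) (fm' : hom x s) (fe' : hom s y) (pm' : mem M fm') (pe' : mem E fe'),
    f = comp fe' fm' ->
    comp (smap H fm pm) (smap G fe pe) = comp (smap G fe' pe') (smap H fm' pm').

(* Main.v *)
Require Import Defs.
From Stdlib Require Import ClassicalEpsilon ProofIrrelevance Eqdep.

Section S.
Variables (C D : Category) (E M : WideSubcat C) (o : C -> D).

Record tfact (x y : C) (f : hom x y) : Type := TF {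
  tt : C; te : hom x tt; tm : hom tt y; tpe : mem E te; tpm : mem M tm;
  teq : f = comp tm te }.

Lemma smap_pi (K : WideSubcat C) (G : @SubFunctor C K D o) x y (f : hom x y) p p' :
  smap G f p = smap G f p'.
Proof. f_equal; apply proof_irrelevance. Qed.

Lemma uniq_val (G : @SubFunctor C E D o) (H : @SubFunctor C M D o) (x y : C) (f : hom x y)
  (Hu : forall (t t' : C) (e : hom x t) (m : hom t y) (e' : hom x t') (m' : hom t' y),
        mem E e -> mem M m -> f = comp m e ->
        mem E e' -> mem M m' -> f = comp m' e' ->
        existT (fun s : C => (hom x s * hom s y)%type) t (e, m)
        = existT (fun s : C => (hom x s * hom s y)%type) t' (e', m'))
  t t' (e : hom x t) (m : hom t y) (e' : hom x t') (m' : hom t' y) pe pm pe' pm' :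
  f = comp m e -> f = comp m' e' ->
  comp (smap H m pm) (smap G e pe) = comp (smap H m' pm') (smap G e' pe').
Proof.
  intros h1 h2. pose proof (Hu _ _ _ _ _ _ pe pm h1 pe' pm' h2) as Heq.
  assert (t = t') by exact (f_equal (@projT1 _ _) Heq). subst t'.
  apply inj_pair2 in Heq. injection Heq; intros; subst.
  rewrite (proof_irrelevance _ pm pm'), (proof_irrelevance _ pe pe'). reflexivity.
Qed.
End S.
Arguments tt {C E M x y f}.
Arguments te {C E M x y f}.
Arguments tm {C E M x y f}.
Arguments tpe {C E M x y f}.
Arguments tpm {C E M x y f}.
Arguments uniq_val {C D E M o}.

Theorem mainTheorem1 (C D : Category) (E M : WideSubcat C)
    (Hvar : variance E M) (o : C -> D)
    (G : @SubFunctor C E D o) (H : @SubFunctor C M D o)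
    (Hcompat : compatible G H) :
  exists F : forall x y : C, hom x y -> hom (o x) (o y),
    is_functor F /\
    (forall (x y : C) (f : hom x y) (p : mem E f), F x y f = smap G f p) /\
    (forall (x y : C) (f : hom x y) (p : mem M f), F x y f = smap H f p) /\
    (forall F' : forall x y : C, hom x y -> hom (o x) (o y),
        is_functor F' ->
        (forall (x y : C) (f : hom x y) (p : mem E f), F' x y f = smap G f p) ->
        (forall (x y : C) (f : hom x y) (p : mem M f), F' x y f = smap H f p) ->
        forall (x y : C) (f : hom x y), F' x y f = F x y f).
Proof.
  destruct Hvar as [HEM HME].
  assert (ch : forall x y (f : hom x y), @tfact C E M x y f).
  { intros x y f.
    apply (@proj1_sig _ (fun _ => True)). apply constructive_indefinite_description.
    destruct (HEM x y f) as [[t [e [m [pe [pm eq]]]]] _].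
    exists (@TF C E M x y f t e m pe pm eq). exact I. }
  set (F := fun x y (f : hom x y) =>
    comp (smap H (tm (ch x y f)) (tpm (ch x y f))) (smap G (te (ch x y f)) (tpe (ch x y f)))).
  assert (Fspec : forall x y (f : hom x y) t (e : hom x t) (m : hom t y) pe pm,
             f = comp m e -> F x y f = comp (smap H m pm) (smap G e pe)).
  { intros x y f t e m pe pm h. unfold F. destruct (ch x y f) as [t0 e0 m0 pe0 pm0 eq0]; simpl.
    eapply uniq_val; [exact (proj2 (HEM x y f)) | exact eq0 | exact h]. }
  assert (FG : forall x y (f : hom x y) p, F x y f = smap G f p).
  { intros x y f p. rewrite (Fspec _ _ f _ f (idm y) p (mem_id M y)) by (symmetry; apply comp_idl).
    rewrite smap_id, comp_idl. reflexivity. }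
  assert (FH : forall x y (f : hom x y) p, F x y f = smap H f p).
  { intros x y f p. rewrite (Fspec _ _ f _ (idm x) f (mem_id E x) p) by (symmetry; apply comp_idr).
    rewrite smap_id, comp_idr. reflexivity. }
  exists F. split; [split|split; [exact FG|split; [exact FH|]]].
  - intros x. rewrite (FG _ _ _ (mem_id E x)). apply smap_id.
  - intros x y z g f.
    destruct (proj1 (HEM x y f)) as [tf [ef [mf [pef [pmf eqf]]]]].
    destruct (proj1 (HEM y z g)) as [tg [eg [mg [peg [pmg eqg]]]]].
    destruct (proj1 (HEM tf tg (comp eg mf))) as [t' [e' [m' [pe' [pm' eq']]]]].
    pose proof (Hcompat _ _ (comp eg mf) _ e' m' pe' pm' eq' _ mf eg pmf peg eq_refl) as HC.
    rewrite (Fspec _ _ g _ eg mg peg pmg eqg), (Fspec _ _ f _ ef mf pef pmf eqf).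
    rewrite (Fspec _ _ (comp g f) _ (comp e' ef) (comp mg m') (mem_comp pef pe')
               (mem_comp pm' pmg)).
    + rewrite (smap_comp H pmg pm'), (smap_comp G pe' pef).
      rewrite <- !comp_assoc. f_equal. rewrite !comp_assoc. f_equal.
      exact HC.
    + subst f g. rewrite !comp_assoc. f_equal. rewrite <- !comp_assoc, eq'. reflexivity.
  - intros F' [F'id F'c] F'G F'H x y f.
    destruct (proj1 (HEM x y f)) as [t [e [m [pe [pm eq]]]]].
    rewrite (Fspec _ _ f _ e m pe pm eq), eq, F'c, (F'G _ _ e pe), (F'H _ _ m pm).
    reflexivity.
Qed.
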